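(* Every online algorithm for Ordered Open End Bin Packing (where $1$-items may occur) has absolute competitive ratio at least $2$.
   Context: Ordered Open End Bin Packing (online): items with sizes in $(0,1]$ arrive one by one (items of size at least $1$ are treated as having size exactly $1$ and are called $1$-items). Each item must be assigned irrevocably upon arrival, without knowledge of future items, to a bin whose current total size is strictly below $1$ (possibly a new, empty bin). The cost is the number of bins used. $\mathrm{OPT}(I)$ is the minimum number of bins in an offline packing of the sequence $I$ obeying the same rule (items are added to bins in the order of the sequence, and an item can be added to a bin only if the bin's current total size is strictly below $1$). The absolute competitive ratio of an algorithm $\mathrm{ALG}$ is $\sup_I \mathrm{ALG}(I)/\mathrm{OPT}(I)$ over all nonempty inputs $I$. *)

(* Defs.v *)
From HB Require Import structures.
From mathcomp Require Import all_boot all_order all_algebra.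
From mathcomp Require Import boolp reals.
Set Implicit Arguments. Unset Strict Implicit. Unset Printing Implicit Defensive.
Import Order.TTheory GRing.Theory Num.Theory.
Local Open Scope ring_scope.

Section OOEBP.
Variable R : realType.

(** An input: a sequence of item sizes, each in (0,1]
    (items of size >= 1 are treated as size exactly 1). *)
Definition valid_input (I : seq R) : Prop :=
  forall x, x \in I -> 0 < x <= 1.

(** A packing of I is a sequence of bin labels [a], item i going to bin
    [nth 0 a i]. *)
Definition load (I : seq R) (a : seq nat) (i : nat) : R :=
  \sum_(0 <= j < i | nth 0%N a j == nth 0%N a i) nth 0 I j.

Definition feasible (I : seq R) (a : seq nat) : Prop :=
  size a = size I /\ forall i, (i < size I)%N -> load I a i < 1.

Definition nbins (a : seq nat) : nat := size (undup a).

Lemma feasible_exists (I : seq R) :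
  exists k, `[< exists a, feasible I a /\ nbins a = k >].
Proof.
exists (nbins (iota 0 (size I))); apply/asboolP.
exists (iota 0 (size I)); split => //; split; first by rewrite size_iota.
move=> i Hi; rewrite /load big_nat_cond big1 ?ltr01 // => j /andP[/andP[_ Hj]].
rewrite !nth_iota ?(ltn_trans Hj Hi) // !add0n => /eqP E.
by rewrite E ltnn in Hj.
Qed.

Definition OPT (I : seq R) : nat := ex_minn (feasible_exists I).

(** A deterministic online algorithm: given the items seen so far and the
    current item, it returns the label of the bin receiving the item
    (a label not used before means a new bin). *)
Definition online_alg := seq R -> R -> nat.

Definition alg_assign (A : online_alg) (I : seq R) : seq nat :=
  [seq A (take i I) (nth 0 I i) | i <- iota 0 (size I)].

Definition ALG (A : online_alg) (I : seq R) : nat := nbins (alg_assign A I).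

Definition valid_alg (A : online_alg) : Prop :=
  forall I, valid_input I -> feasible I (alg_assign A I).

End OOEBP.

(* Main.v *)
Require Import Defs.
From HB Require Import structures.
From mathcomp Require Import all_boot all_order all_algebra.
From mathcomp Require Import boolp reals.
From mathcomp Require Import zify ring lra.
Import Order.TTheory GRing.Theory Num.Theory.
Local Open Scope ring_scope.

Section Proof.
Variables (R : realType) (A : online_alg R).
Hypothesis hA : valid_alg A.
Variable N : nat.
Hypothesis N1 : (0 < N)%N.

Definition eps : R := (N.+1)%:R^-1.
Definition item (i : nat) : R :=
  if (i %% 3 == 0)%N then eps else if (i %% 3 == 1)%N then 1 - eps else 1.
Definition g (i : nat) : nat := A (mkseq item i) (item i).

Lemma eps_gt0 : 0 < eps.
Proof. by rewrite /eps invr_gt0 ltr0n. Qed.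

Lemma eps_lt1 : eps < 1.
Proof. by rewrite /eps invf_lt1 ?ltr0n // ltr1n ltnS. Qed.

Lemma item_ge0 i : 0 <= item i.
Proof.
have e0 := eps_gt0; have e1 := eps_lt1.
rewrite /item; case: ifP => _; first lra; case: ifP => _; lra.
Qed.

Lemma item0 j : item (3 * j)%N = eps.
Proof. by rewrite /item; have -> : ((3 * j)%N %% 3 = 0)%N by lia. Qed.
Lemma item1 j : item (3 * j)%N.+1 = 1 - eps.
Proof. by rewrite /item; have -> : ((3 * j)%N.+1 %% 3 = 1)%N by lia. Qed.
Lemma item2 j : item (3 * j)%N.+2 = 1.
Proof. by rewrite /item; have -> : ((3 * j)%N.+2 %% 3 = 2)%N by lia. Qed.

Lemma valid_item n : valid_input (mkseq item n).
Proof.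
have e0 := eps_gt0; have e1 := eps_lt1.
move=> x /mapP [i _ ->]; rewrite /item.
case: ifP => _; first (apply/andP; split; lra).
case: ifP => _; apply/andP; split; lra.
Qed.

Lemma alg_mk n : alg_assign A (mkseq item n) = mkseq g n.
Proof.
rewrite /alg_assign size_mkseq /mkseq; apply/eq_in_map => i.
rewrite mem_iota add0n => /andP[_ hi].
rewrite /g.
have -> : nth 0 [seq item i0 | i0 <- iota 0 n] i = item i by exact: (nth_mkseq 0 item hi).
by rewrite -map_take take_iota; have -> : minn i n = i by lia.
Qed.

Lemma load_mk n (f : nat -> nat) i : (i < n)%N ->
  load (mkseq item n) (mkseq f n) i = \sum_(0 <= j < i | f j == f i) item j.
Proof.
move=> hi; rewrite /load (nth_mkseq 0%N f hi).
apply: congr_big_nat => //.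
  move=> j /andP[_ hj].
  by rewrite (nth_mkseq 0%N f (ltn_trans hj hi)).
move=> j /andP[_ /andP[_ hj]].
by rewrite (nth_mkseq 0 item (ltn_trans hj hi)).
Qed.

Lemma feas i : \sum_(0 <= j < i | g j == g i) item j < 1.
Proof.
have [_ H] := hA _ (valid_item i.+1).
have := H i; rewrite size_mkseq ltnSn => /(_ isT).
by rewrite alg_mk load_mk.
Qed.


Lemma sum_ge1 (P : pred nat) (F : nat -> R) q i : (forall k, 0 <= F k) ->
  (q < i)%N -> P q -> F q <= \sum_(0 <= k < i | P k) F k.
Proof.
move=> F0 qi Pq.
rewrite (big_cat_nat (leq0n q) (ltnW qi)) /= [X in _ + X]big_ltn_cond // Pq.
have s1 : 0 <= \sum_(0 <= k < q | P k) F k by apply: sumr_ge0.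
have s2 : 0 <= \sum_(q.+1 <= k < i | P k) F k by apply: sumr_ge0.
lra.
Qed.

Lemma sum_ge2 (P : pred nat) (F : nat -> R) q i : (forall k, 0 <= F k) ->
  (q.+1 < i)%N -> P q -> P q.+1 -> F q + F q.+1 <= \sum_(0 <= k < i | P k) F k.
Proof.
move=> F0 qi Pq Pq1.
have qi' : (q <= i)%N by lia.
rewrite (big_cat_nat (leq0n q) qi') /= [X in _ <= _ + X]big_ltn_cond ?Pq; last by lia.
rewrite (@big_ltn_cond _ _ _ q.+1 i P F) // Pq1.
have s1 : 0 <= \sum_(0 <= k < q | P k) F k by apply: sumr_ge0.
have s2 : 0 <= \sum_(q.+2 <= k < i | P k) F k by apply: sumr_ge0.
lra.
Qed.

Definition conf j := g (3 * j)%N.+1 = g (3 * j)%N.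

Lemma closed q p : (q < p)%N -> (q %/ 3 * 3 + 2 <= p)%N -> conf (q %/ 3)%N ->
  g p != g q.
Proof.
move=> qp qp2 cf; apply/eqP => E.
have F := feas p; rewrite E in F.
have e0 := eps_gt0.
set j := (q %/ 3)%N in qp2 cf.
have h : ((3 * j)%N.+1 < p)%N by lia.
have [Hq|[Hq|Hq]] : q = (3 * j)%N \/ q = (3 * j)%N.+1 \/ q = (3 * j)%N.+2 by rewrite /j; lia.
- have := @sum_ge2 (fun k => g k == g q) item (3 * j)%N p item_ge0 h.
  rewrite item0 item1 /= Hq cf eqxx => /(_ isT isT) h2; move: F; rewrite Hq ?cf => F; by move: (le_lt_trans h2 F); rewrite addrC subrK ltxx.
- have := @sum_ge2 (fun k => g k == g q) item (3 * j)%N p item_ge0 h.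
  rewrite item0 item1 /= Hq cf eqxx => /(_ isT isT) h2; move: F; rewrite Hq ?cf => F; by move: (le_lt_trans h2 F); rewrite addrC subrK ltxx.
- have := @sum_ge1 (fun k => g k == g q) item q p item_ge0 qp.
  rewrite eqxx => /(_ isT); rewrite Hq item2 => h2; move: F; rewrite Hq => F; by move: (le_lt_trans h2 F); rewrite ltxx.
Qed.


Lemma nb_mono (s : seq nat) x : (size (undup s) <= size (undup (rcons s x)))%N.
Proof.
apply: uniq_leq_size; first exact: undup_uniq.
by move=> y; rewrite !mem_undup mem_rcons inE => ->; rewrite orbT.
Qed.

Lemma nb_fresh (s : seq nat) x : x \notin s ->
  size (undup (rcons s x)) = (size (undup s)).+1.
Proof.
move=> xs; rewrite undup_rcons size_rcons.
have /all_filterP -> // : all (fun y => y != x) (undup s).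
apply/allP => y; rewrite mem_undup => ys.
by apply/eqP => E; rewrite -E ys in xs.
Qed.

Lemma notin_mk k : (forall q, (q < k)%N -> g k != g q) -> g k \notin mkseq g k.
Proof.
move=> H; apply/mapP => [[q]]; rewrite mem_iota add0n => /andP[_ qk] E.
by move: (H q qk); rewrite E eqxx.
Qed.

Lemma step_fresh k : (forall q, (q < k)%N -> g k != g q) ->
  nbins (mkseq g k.+1) = (nbins (mkseq g k)).+1.
Proof. by move=> H; rewrite /nbins (mkseqS g k) nb_fresh // notin_mk. Qed.

Lemma step_mono k : (nbins (mkseq g k) <= nbins (mkseq g k.+1))%N.
Proof. by rewrite /nbins (mkseqS g k) nb_mono. Qed.

Lemma fresh0 j : (forall j', (j' < j)%N -> conf j') ->
  forall q, (q < 3 * j)%N -> g (3 * j)%N != g q.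
Proof.
move=> H q qj; apply: closed => //; first lia.
by apply: H; lia.
Qed.

Lemma cntA j : (forall j', (j' < j)%N -> conf j') -> (2 * j <= nbins (mkseq g (3 * j)))%N.
Proof.
elim: j => [|j IH] H; first by [].
have H' : forall j', (j' < j)%N -> conf j' by move=> j' hj; apply: H; lia.
have e0 := IH H'.
have e1 := step_fresh _ (fresh0 _ H').
have e2 := step_mono (3 * j)%N.+1.
have e3 : nbins (mkseq g (3 * j)%N.+3) = (nbins (mkseq g (3 * j)%N.+2)).+1.
  apply: step_fresh => q qj; apply: closed => //; first lia.
  by apply: H; lia.
have -> : (3 * j.+1 = (3 * j).+3)%N by lia.
lia.
Qed.

Lemma cntB j : (forall j', (j' < j)%N -> conf j') -> ~ conf j ->
  (2 * j + 2 <= nbins (mkseq g (3 * j)%N.+2))%N.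
Proof.
move=> H nc.
have e0 := cntA _ H.
have e1 := step_fresh _ (fresh0 _ H).
have e2 : nbins (mkseq g (3 * j)%N.+2) = (nbins (mkseq g (3 * j)%N.+1)).+1.
  apply: step_fresh => q qj.
  have [qlt|qeq] : (q < 3 * j)%N \/ q = (3 * j)%N by lia.
    apply: closed => //; first lia.
    by apply: H; lia.
  by rewrite qeq; apply/eqP.
lia.
Qed.


Definition hp (m i : nat) : nat :=
  if (i %% 3 == 0)%N then 0%N else if (i < 3 * m)%N then (i %/ 3)%N.+1 else 0%N.

Lemma sum_single (P : pred nat) (F : nat -> R) c i : (forall k, 0 <= F k) ->
  (forall k, (k < i)%N -> P k -> k = c) ->
  \sum_(0 <= k < i | P k) F k <= (if (c < i)%N then F c else 0).
Proof.
move=> F0; elim: i => [|i IH] H; first by rewrite big_geq.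
rewrite big_mkcond big_nat_recr //= -big_mkcond.
have IH' := IH (fun k hk => H k (leqW hk)).
case Pi: (P i).
  have ci := H i (ltnSn i) Pi.
  rewrite -ci ltnSn; rewrite -ci ltnn in IH'; lra.
have Fc := F0 c.
case: (ltnP c i) => ci.
  rewrite ci in IH'; rewrite ltnS (ltnW ci); lra.
have : (c < i)%N = false by apply/negbTE; rewrite -leqNgt.
move=> E; rewrite E in IH'; case: ifP => _; lra.
Qed.

Lemma sum_ext (P : pred nat) (F : nat -> R) i i' : (forall k, 0 <= F k) ->
  (i <= i')%N -> \sum_(0 <= k < i | P k) F k <= \sum_(0 <= k < i' | P k) F k.
Proof.
move=> F0 ii; rewrite (big_cat_nat (leq0n i) ii) /=.
have : 0 <= \sum_(i <= k < i' | P k) F k by apply: sumr_ge0.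
lra.
Qed.

Lemma sum_eps t (P : pred nat) : (forall k, P k -> k %% 3 = 0)%N ->
  \sum_(0 <= k < 3 * t | P k) item k <= t%:R * eps.
Proof.
move=> H; elim: t => [|t IH]; first by rewrite big_geq // mul0r.
have -> : (3 * t.+1 = (3 * t).+3)%N by lia.
rewrite big_mkcond !big_nat_recr //= -big_mkcond.
have -> : P (3 * t)%N.+1 = false by apply/negbTE/negP => /H; lia.
have -> : P (3 * t)%N.+2 = false by apply/negbTE/negP => /H; lia.
have e0 := eps_gt0.
have h0 : (if P (3 * t)%N then item (3 * t)%N else 0) <= eps.
  by case: ifP => _; rewrite ?item0; lra.
rewrite -[t.+1]addn1 natrD mulrDl mul1r.
set x := t%:R * eps in IH *.
set S := \sum_(0 <= k < 3 * t | P k) item k in IH *.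
lra.
Qed.

Lemma Neps : N%:R * eps < 1.
Proof.
by rewrite /eps ltr_pdivrMr ?ltr0n // mul1r ltr_nat.
Qed.

Lemma feas_hp m n : (m <= N)%N -> (n <= 3 * m + 2)%N -> (n <= 3 * N)%N ->
  feasible (mkseq item n) (mkseq (hp m) n).
Proof.
move=> mN nm nN; split; first by rewrite !size_mkseq.
move=> i; rewrite size_mkseq => hi; rewrite load_mk //.
have e0 := eps_gt0; have e1 := eps_lt1.
have [hi0|[hi1 [i0 im]]] : (hp m i = 0 \/
    (hp m i = (i %/ 3).+1 /\ i %% 3 != 0 /\ i < 3 * m))%N.
  rewrite /hp; case: ifP => h1; first by left.
  by case: ifP => h2; [right | left].
- rewrite hi0.
  apply: le_lt_trans Neps.
  have -> : \sum_(0 <= j < i | hp m j == 0%N) item j =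
            \sum_(0 <= j < i | (hp m j == 0%N) && (j < i)%N) item j.
    apply: congr_big_nat => // j /andP[_ ->]; by rewrite andbT.
  apply: le_trans (@sum_ext _ item i (3 * N)%N item_ge0 _) _; first lia.
  apply: sum_eps => k /andP[]; rewrite /hp.
  case: ifP => h1; first by move=> _ _; apply/eqP.
  case: ifP => h2 //= _ ki.
  have : (k %% 3 != 0)%N by rewrite h1.
  move=> h3; lia.
- rewrite hi1.
  apply: le_lt_trans (@sum_single _ item (3 * (i %/ 3))%N.+1 i item_ge0 _) _.
    move=> k ki; rewrite /hp.
    case: ifP => h1 //.
    case: ifP => h2 //= /eqP [] h3.
    have : (k %% 3 != 0)%N by rewrite h1.
    move=> h4; lia.
  by case: ifP => _; rewrite ?item1; lra.
Qed.

Lemma nb_hp m n : (nbins (mkseq (hp m) n) <= m.+1)%N.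
Proof.
apply: (@leq_trans (size (iota 0 m.+1))); last by rewrite size_iota.
apply: uniq_leq_size; first exact: undup_uniq.
move=> y; rewrite mem_undup => /mapP [i _ ->]; rewrite mem_iota add0n /hp.
case: ifP => _ //; case: ifP => ? //; lia.
Qed.


Lemma opt_le (I : seq R) a : feasible I a -> (OPT I <= nbins a)%N.
Proof.
move=> Fa; rewrite /OPT; case: ex_minnP => k _ Hk; apply: Hk.
by apply/asboolP; exists a.
Qed.

Lemma opt_gt0 (I : seq R) : I != [::] -> (0 < OPT I)%N.
Proof.
rewrite /OPT; case: ex_minnP => k /asboolP [a [[sa _] <-]] _ In.
rewrite /nbins; case: a sa => [|x a'] sa.
  by move: In; case: I sa.
have : x \in undup (x :: a') by rewrite mem_undup mem_head.
by case: (undup _).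
Qed.

Lemma main_N (r : R) : r * (N.+1)%:R < 2 * N%:R ->
  exists I : seq R, [/\ valid_input I, I != [::] &
    r < (ALG A I)%:R / (OPT I)%:R].
Proof.
move=> hr.
have [allc|] := boolP (all (fun j => g (3 * j)%N.+1 == g (3 * j)%N) (iota 0 N)).
  have H : forall j', (j' < N)%N -> conf j'.
    move=> j' hj; apply/eqP; move/allP: allc; apply; rewrite mem_iota; lia.
  exists (mkseq item (3 * N)); split; first exact: valid_item.
    by rewrite -size_eq0 size_mkseq; lia.
  have ne : mkseq item (3 * N) != [::] by rewrite -size_eq0 size_mkseq; lia.
  have o0 := opt_gt0 _ ne.
  have o1 := leq_trans (opt_le _ _ (feas_hp _ _ (leqnn N) (_ : (3 * N <= 3 * N + 2)%N) (leqnn _))) (nb_hp N (3 * N)).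
  have a1 := cntA _ H.
  rewrite /ALG alg_mk.
  have o1' : (OPT (mkseq item (3 * N)) <= N.+1)%N by apply: o1; lia.
  move: o0 o1' a1.
  set o := OPT _; set a := nbins _ => o0 o1' a1.
  rewrite ltr_pdivlMr ?ltr0n //.
  have ho : o%:R <= (N.+1)%:R :> R by rewrite ler_nat.
  have ho1 : 1 <= o%:R :> R by rewrite ler1n.
  have ha : 2 * N%:R <= a%:R :> R by rewrite -natrM ler_nat.
  have hN : 1 <= N%:R :> R by rewrite ler1n.
  nra.
move=> /allPn [j1 j1in nc1].
have ex : exists j, ((j < N)%N && (g (3 * j)%N.+1 != g (3 * j)%N)).
  by exists j1; rewrite nc1 andbT; move: j1in; rewrite mem_iota; lia.
case: (ex_minnP ex) => j0 /andP[j0N nc0] jmin.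
have H : forall j', (j' < j0)%N -> conf j'.
  move=> j' hj; apply/eqP; apply: contraTT (hj); rewrite -leqNgt => hh.
  by apply: jmin; rewrite hh andbT; lia.
exists (mkseq item (3 * j0)%N.+2); split; first exact: valid_item.
  by rewrite -size_eq0 size_mkseq.
have ne : mkseq item (3 * j0)%N.+2 != [::] by rewrite -size_eq0 size_mkseq.
have o0 := opt_gt0 _ ne.
have o1 := leq_trans (opt_le _ _ (feas_hp _ _ (ltnW j0N) (_ : ((3 * j0).+2 <= 3 * j0 + 2)%N) (_ : ((3 * j0).+2 <= 3 * N)%N))) (nb_hp j0 (3 * j0)%N.+2).
have a1 := cntB _ H (fun c => (negP nc0) (introT eqP c)).
rewrite /ALG alg_mk.
have o1' : (OPT (mkseq item (3 * j0)%N.+2) <= j0.+1)%N by apply: o1; lia.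
move: o0 o1' a1.
set o := OPT _; set a := nbins _ => o0 o1' a1.
rewrite ltr_pdivlMr ?ltr0n //.
have ho : o%:R <= (j0.+1)%:R :> R by rewrite ler_nat.
have ho1 : 1 <= o%:R :> R by rewrite ler1n.
have ha : 2 * (j0.+1)%:R <= a%:R :> R by rewrite -natrM ler_nat; lia.
have r2 : r < 2.
  have hN : 1 <= N%:R :> R by rewrite ler1n.
  nra.
nra.
Qed.

End Proof.

Theorem mainTheorem4 (R : realType) (A : online_alg R) :
  valid_alg A ->
  forall r : R, r < 2 ->
  exists I : seq R, [/\ valid_input I, I != [::] &
    r < (ALG A I)%:R / (OPT I)%:R].
Proof.
move=> hA r hr.
set N := (Num.truncn (2 / (2 - r))).+1.
have hN : 2 / (2 - r) < N%:R by exact: truncnS_gt.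
have p : 0 < 2 - r by lra.
rewrite ltr_pdivrMr // in hN.
apply: (@main_N R A hA N _ r); first by [].
rewrite -[N.+1]addn1 natrD.
nra.
Qed.
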